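(* Assume the refinement-probability condition with $\delta_+\in(0,1]$ and fix $\delta_-\in(0,1)$. Suppose that whenever the GSR algorithm introduces a new level $m$ it draws an i.i.d. batch of size $J$ from $\mathsf{Gen}(a,m)$, where $a$ is the anchor at that call, with $$J:=\Big\lceil\frac{\log((\overline m_T+1)/\delta_-)}{\log(1/(1-\delta_+))}\Big\rceil\le\Big\lceil\frac1{\delta_+}\log\frac{\overline m_T+1}{\delta_-}\Big\rceil.$$ Then with probability at least $1-\delta_-$, simultaneously for every level $m\in\{1,\dots,\overline m_T\}$ that is introduced, the corresponding batch contains some task $i_m$ with $U^\star-U^{(i_m)}\le\epsilon^U_m$.
   Context: Tasks have long-run values $U^{(i)}\in[0,1]$, $U^\star:=\sup_iU^{(i)}$; $\epsilon^U_m:=\epsilon^U_02^{-m}$. The GSR algorithm maintains a level counter $m\in\{0,\dots,\overline m_T\}$ and an anchor task $a_t$ with uncertainty width $w_t$; it increments the level from $m-1$ to $m$ (introduces level $m$) only at a round where $w_t\le c_g\epsilon^U_{m-1}$ (constant $c_g>0$), and at that moment adds a batch from $\mathsf{Gen}(a_t,m)$; each level is introduced at most once. Refinement-probability condition: there is $\delta_+\in(0,1]$ such that for every $m\ge1$ and every anchor with $w_t\le c_g\epsilon^U_{m-1}$, a single draw from $\mathsf{Gen}(a_t,m)$ is $\epsilon^U_m$-optimal (i.e. $U^\star-U^{(i)}\le\epsilon^U_m$) with probability at least $\delta_+$. *)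

(* Defs.v *)
From HB Require Import structures.
From mathcomp Require Import all_boot all_order all_algebra.
From mathcomp Require Import all_classical all_reals all_analysis.
Set Implicit Arguments. Unset Strict Implicit. Unset Printing Implicit Defensive.
Import Order.TTheory GRing.Theory Num.Theory.
Local Open Scope classical_set_scope.
Local Open Scope ring_scope.

Definition epsU (R : realType) (eps0 : R) (m : nat) : R := eps0 / 2 ^+ m.

Definition Ustar (R : realType) (T : Type) (U : T -> R) : R := sup (range U).

Definition eps_opt (R : realType) (T : Type) (U : T -> R) (eps0 : R) (m : nat)
  : set T := [set i | Ustar U - U i <= epsU eps0 m].

(* The batch size J = ceil( log((mbar+1)/delta_-) / log(1/(1-delta_+)) ).
   For delta_+ = 1 the formula degenerates (log(1/0)); we then take J = 1. *)
Definition batch_size (R : realType) (dplus dminus : R) (mbar : nat) : nat :=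
  if dplus < 1 then
    `|Num.ceil (ln (mbar.+1%:R / dminus) / ln ((1 - dplus)^-1))|%N
  else 1%N.

(* Conditional i.i.d. batch: given the history sigma-algebra G (with respect
   to which the anchor A is measurable), the J draws D j are i.i.d. with law
   K (A x), i.e. for every history event H and measurable sets B_j,
   P(H /\ forall j, D j in B j) = E[ 1_H * prod_j K (A .) (B j) ]. *)
Definition cond_iid_batch d d' (Omega : measurableType d)
  (Tk : measurableType d') (R : realType) (P : probability Omega R)
  (G : set (set Omega)) (J : nat) (A : Omega -> Tk)
  (K : R.-pker Tk ~> Tk) (D : 'I_J -> Omega -> Tk) : Prop :=
  [/\ sigma_algebra setT G, G `<=` measurable,
      (forall B, measurable B -> G (A @^-1` B)) &
      forall H, G H -> forall B : 'I_J -> set Tk, (forall j, measurable (B j)) ->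
        P (H `&` \bigcap_(j in [set: 'I_J]) (D j @^-1` B j))
        = (\int[P]_(x in H) (\prod_(j < J) K (A x) (B j)))%E ].

(* Main.v *)
Require Import Defs.
From HB Require Import structures.
From mathcomp Require Import all_boot all_order all_algebra.
From mathcomp Require Import all_classical all_reals all_analysis.
From mathcomp Require Import measurable_realfun lebesgue_measure.
From mathcomp Require Import ring lra.
Import Order.TTheory GRing.Theory Num.Theory.
Local Open Scope classical_set_scope.
Local Open Scope ring_scope.

Lemma prod_ord_le (R : realType) (c : R) n (f : 'I_n -> \bar R) :
  (forall i, 0 <= f i)%E -> (forall i, f i <= c%:E)%E ->
  (\prod_(i < n) f i <= (c ^+ n)%:E)%E.
Proof.
move=> f0 fc; elim: n f f0 fc => [|n IH] f f0 fc; first by rewrite big_ord0 expr0.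
rewrite big_ord_recr /= exprSr EFinM; apply: lee_pmul => //.
- by apply: prode_ge0.
- by apply: IH.
Qed.

Lemma mprod (R : realType) d (T : measurableType d) (D : set T) (I : Type)
  (s : seq I) (P : pred I) (h : I -> T -> \bar R) :
  (forall i, measurable_fun D (h i)) ->
  measurable_fun D (fun x => \prod_(i <- s | P i) h i x)%E.
Proof.
move=> mh; elim: s => [|a s IH].
  rewrite (_ : (fun x => _) = (fun _ => 1%E)); first exact: measurable_cst.
  by apply/funext => x; rewrite big_nil.
case Pa: (P a).
  rewrite (_ : (fun x => _) = (h a \* (fun x => \prod_(i <- s | P i) h i x))%E).
    exact: emeasurable_funM.
  by apply/funext => x; rewrite big_cons Pa.
rewrite (_ : (fun x => _) = (fun x => \prod_(i <- s | P i) h i x))%E //.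
by apply/funext => x; rewrite big_cons Pa.
Qed.

Lemma real_part (R : realType) (dplus dminus : R) (mbar : nat) :
  0 < dplus <= 1 -> 0 < dminus < 1 ->
  (batch_size dplus dminus mbar
     <= `|Num.ceil (dplus^-1 * ln (mbar.+1%:R / dminus))|)%N /\
  (1 - dplus) ^+ (batch_size dplus dminus mbar) * mbar.+1%:R <= dminus.
Proof.
move=> /andP[dp0 dp1] /andP[dm0 dm1].
set N : R := mbar.+1%:R.
have N1 : 1 <= N by rewrite /N ler1n.
have N0 : 0 < N by apply: (lt_le_trans ltr01 N1).
have L0 : 0 < ln (N / dminus).
  apply: ln_gt0; rewrite ltr_pdivlMr // mul1r; exact: (lt_le_trans dm1 N1).
rewrite /batch_size; case: ifPn => dlt.
- set q := 1 - dplus.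
  have q0 : 0 < q by rewrite /q subr_gt0.
  have l0 : 0 < ln q^-1 by apply: ln_gt0; rewrite invf_gt1 // /q; lra.
  have lge : dplus <= ln q^-1.
    rewrite lnV ?posrE //; have := @le_ln1Dx R (- dplus).
    rewrite /q addrC; move=> /(_ ltac:(lra)); lra.
  have c0 : 0 <= Num.ceil (ln (N / dminus) / ln q^-1).
    by apply/ltW; rewrite ceil_gt0 divr_gt0.
  have c1 : 0 <= Num.ceil (dplus^-1 * ln (N / dminus)).
    by apply/ltW; rewrite ceil_gt0 mulr_gt0 // invr_gt0.
  split.
    rewrite -lez_nat !abszE !ger0_norm //; apply: le_ceil.
    rewrite -/N mulrC ler_wpM2r ?(ltW L0) // lef_pV2 // posrE //.
  rewrite -/N; set z := Num.ceil _.
  have Jz : (`|z|%:R : R) = z%:~R by rewrite natr_absz ger0_norm.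
  have JL : ln (N / dminus) <= `|z|%:R * ln q^-1.
    by rewrite -ler_pdivrMr // Jz ceil_ge.
  have pJ : 0 < q ^+ `|z| by rewrite exprn_gt0.
  have h : N / dminus <= (q ^+ `|z|)^-1.
    rewrite -ler_ln ?posrE ?invr_gt0 ?divr_gt0 //.
    by rewrite -exprVn lnXn ?invr_gt0 // -mulr_natl.
  rewrite ler_pdivrMr // in h.
  have hp : q ^+ `|z| * (q ^+ `|z|)^-1 = 1 by rewrite mulfV // gt_eqF.
  by have := ler_wpM2l (ltW pJ) h; rewrite mulrA hp mul1r.
- have -> : dplus = 1 by lra.
  split; last by rewrite subrr expr1 mul0r ltW.
  by rewrite absz_gt0 gt_eqF // ceil_gt0 invr1 mul1r.
Qed.

Theorem lemmaC19 (R : realType) (d d' : measure_display)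
  (Omega : measurableType d) (Task : measurableType d')
  (P : probability Omega R)
  (U : Task -> R) (eps0 cg dplus dminus : R) (mbar : nat)
  (Gen : nat -> R.-pker Task ~> Task)
  (Intro : nat -> set Omega) (A : nat -> Omega -> Task) (W : nat -> Omega -> R)
  (G : nat -> set (set Omega))
  (D : nat -> 'I_(batch_size dplus dminus mbar) -> Omega -> Task) :
  measurable_fun setT U -> (forall i, 0 <= U i <= 1) ->
  0 < eps0 -> 0 < cg ->
  0 < dplus <= 1 -> 0 < dminus < 1 ->
  (* level m is introduced only when the anchor width is <= c_g eps_{m-1} *)
  (forall m, (1 <= m <= mbar)%N -> forall w, Intro m w ->
     W m w <= cg * epsU eps0 m.-1) ->
  (* refinement-probability condition *)
  (forall m, (1 <= m <= mbar)%N -> forall w,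
     W m w <= cg * epsU eps0 m.-1 ->
     (dplus%:E <= Gen m (A m w) (eps_opt U eps0 m))%E) ->
  (forall m, (1 <= m <= mbar)%N ->
     [/\ measurable (Intro m), G m (Intro m), measurable_fun setT (A m)
       & forall j, measurable_fun setT (D m j)]) ->
  (* the batch for level m is i.i.d. from Gen(a, m), a the anchor at that call *)
  (forall m, (1 <= m <= mbar)%N ->
     cond_iid_batch P (G m) (A m) (Gen m) (D m)) ->
  (batch_size dplus dminus mbar
     <= `|Num.ceil (dplus^-1 * ln (mbar.+1%:R / dminus))|)%N /\
  ((1 - dminus)%:E <=
     P [set w | forall m, (1 <= m <= mbar)%N -> Intro m w ->
                  exists j, eps_opt U eps0 m (D m j w)])%E.
Proof.
move=> mU U01 e0 cg0 dp dm hW hGen hmeas hiid.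
have [rp1 rp2] := @real_part R dplus dminus mbar dp dm.
split => //.
move: rp2; set c := (1 - dplus) ^+ _ => rp2.
have c0 : 0 <= c.
  by rewrite /c exprn_ge0 // subr_ge0; case/andP: dp.
have mE : forall m, measurable (eps_opt U eps0 m).
  move=> m.
  have -> : eps_opt U eps0 m = U @^-1` `[Ustar U - epsU eps0 m, +oo[.
    apply/seteqP; split => x /=; rewrite /eps_opt /= in_itv /= andbT; lra.
  rewrite -(setTI (U @^-1` _)); apply: mU => //.
pose F m := Intro m `&` \bigcap_(j in [set: 'I_(batch_size dplus dminus mbar)])
   (D m j @^-1` ~` eps_opt U eps0 m).
pose Fn (i : nat) := if (1 <= i <= mbar)%N then F i else set0.
have mF : forall i, measurable (Fn i).
  move=> i; rewrite /Fn; case: ifP => // hi.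
  have [mI _ mA mD] := hmeas i hi.
  apply: measurableI => //; apply: fin_bigcap_measurable; first exact: finite_finset.
  move=> j _; rewrite -(setTI (D i j @^-1` _)); apply: mD => //.
  exact: measurableC.
have PF : forall i, (P (Fn i) <= c%:E)%E.
  move=> i; rewrite /Fn; case: ifP => hi; last by rewrite measure0 lee_fin.
  have [sG Gm GA Hiid] := hiid i hi.
  have [mI GI mA mD] := hmeas i hi.
  have mB : measurable (~` eps_opt U eps0 i) by exact: measurableC.
  rewrite /F (Hiid _ GI (fun _ => ~` eps_opt U eps0 i)); last by move=> _.
  apply: (@le_trans _ _ (\int[P]_(x in Intro i) (cst c%:E x))%E).
    apply: ge0_le_integral => //.
    - by move=> x _; apply: prode_ge0 => j _.
    - apply: mprod => j.
      apply: (measurable_funS measurableT) => //.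
      exact: (measurableT_comp (measurable_kernel (Gen i) _ mB) mA).
    - move=> x Ix; apply: prod_ord_le => j //.
      have hd := hGen i hi x (hW i hi x Ix).
      have hs := measureU (Gen i (A i x)) (mE i) mB (setICr _).
      have h1 : Gen i (A i x) [set: Task] = 1%E by apply: prob_kernel.
      rewrite setUCr in hs.
      have {}hs : 1%E = (Gen i (A i x) (eps_opt U eps0 i) + Gen i (A i x) (~` eps_opt U eps0 i))%E := etrans (esym h1) hs.
      move: hs hd (measure_ge0 (Gen i (A i x)) (eps_opt U eps0 i))
        (measure_ge0 (Gen i (A i x)) (~` eps_opt U eps0 i)).
      case: (Gen i (A i x) (eps_opt U eps0 i)) => [s| |];
      case: (Gen i (A i x) (~` eps_opt U eps0 i)) => [r| |] //=.
      rewrite -EFinD => /eqP; rewrite eqe !lee_fin => /eqP hs0 g1 g2 g3.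
      rewrite /c; lra.
  rewrite integral_cst // muleC; apply: gee_pMl => //.
  - rewrite ge0_fin_numE //; apply: (le_lt_trans (probability_le1 P mI)).
    exact: ltry.
  - exact: probability_le1.
pose Bad := \big[setU/set0]_(i < mbar.+1) Fn i.
have mBad : measurable Bad by apply: bigsetU_measurable => i _; exact: mF.
have -> : [set w | forall m, (1 <= m <= mbar)%N -> Intro m w ->
                  exists j, eps_opt U eps0 m (D m j w)] = ~` Bad.
  apply/seteqP; split => w /=.
  - move=> Hw; rewrite /Bad -bigcup_mkord => -[i /= ilt].
    rewrite /Fn; case: ifP => // hi [Ii Hall].
    have [j Ej] := Hw i hi Ii.
    exact: (Hall j Logic.I Ej).
  - move=> Hw m hm Im; apply: contrapT => hne; apply: Hw.
    rewrite /Bad -bigcup_mkord; exists m.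
      by case/andP: hm => _ hm; rewrite /= ltnS.
    rewrite /Fn hm; split => // j _ Ej; apply: hne; by exists j.
rewrite probability_setC //.
have hsum : forall n, (\sum_(i < n) c%:E = (c *+ n)%:E)%E.
  elim=> [|n IH]; first by rewrite big_ord0.
  by rewrite big_ord_recr /= IH mulrSr EFinD.
have hB : (P Bad <= dminus%:E)%E.
  apply: (le_trans (Boole_inequality _ (fun i _ => mF i))).
  apply: (@le_trans _ _ (\sum_(i < mbar.+1) c%:E)%E).
    by apply: lee_sum => i _; exact: PF.
  by rewrite hsum lee_fin -mulr_natr.
move: hB (measure_ge0 P Bad).
case: (P Bad) => [r| |] //=.
- by rewrite !lee_fin => h1 h2; lra.
- by move=> _ _; rewrite addey // leey.
Qed.
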